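(* Let $T$ be an $n\times n$ complex matrix with distinct eigenvalues $\lambda_1,\dots,\lambda_n$. Let $u_1,\dots,u_n$ be unit eigenvectors of $T$ with $Tu_i=\lambda_iu_i$, and let $v_1,\dots,v_n$ be unit eigenvectors of $T^*$ with $T^*v_i=\overline{\lambda_i}v_i$. If $T$ is unitarily equivalent to a complex symmetric matrix, then $|\langle u_i,u_j\rangle|=|\langle v_i,v_j\rangle|$ for all $1\le i<j\le n$.
   Context: A complex symmetric matrix is a square complex matrix $S$ with $S=S^t$ (transpose). Two matrices $A,B\in M_n(\mathbb{C})$ are unitarily equivalent if $A=U^*BU$ for some unitary $U$. $\langle\cdot,\cdot\rangle$ is the standard inner product on $\mathbb{C}^n$. *)

(* Defs.v *)
From mathcomp Require Import all_boot all_algebra.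
From mathcomp Require Import complex reals.
Set Implicit Arguments. Unset Strict Implicit. Unset Printing Implicit Defensive.
Import GRing.Theory Num.Theory.
Local Open Scope ring_scope.
Local Open Scope complex_scope.

Definition adjmx (R : realType) (m n : nat) (A : 'M[R[i]]_(m, n)) : 'M[R[i]]_(n, m) :=
  (map_mx (fun z : R[i] => z^*) A)^T.

Definition cdot (R : realType) (n : nat) (x y : 'cV[R[i]]_n) : R[i] :=
  \sum_(k < n) x k ord0 * (y k ord0)^*.

Definition unitary_mx (R : realType) (n : nat) (U : 'M[R[i]]_n) : Prop :=
  adjmx U *m U = 1%:M.

Definition unitarily_equivalent (R : realType) (n : nat) (A B : 'M[R[i]]_n) : Prop :=
  exists U : 'M[R[i]]_n, unitary_mx U /\ A = adjmx U *m B *m U.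

Definition complex_symmetric (R : realType) (n : nat) (S : 'M[R[i]]_n) : Prop :=
  S^T = S.

Definition unit_vec (R : realType) (n : nat) (x : 'cV[R[i]]_n) : Prop :=
  cdot x x = 1.

(* Main.v *)
Require Import Defs.
From mathcomp Require Import all_boot all_algebra.
From mathcomp Require Import complex reals.
Import GRing.Theory Num.Theory.
Local Open Scope ring_scope.
Local Open Scope complex_scope.

Lemma eig1 (F : fieldType) (n : nat) (g : 'M[F]_n) (a : 'I_n -> F)
  (w : 'I_n -> 'rV[F]_n) :
  injective a -> (forall i, w i != 0) -> (forall i, w i *m g = a i *: w i) ->
  forall i (x : 'rV[F]_n), x *m g = a i *: x -> exists c, x = c *: w i.
Proof.
move=> ia nz ew i x ex.
have dx := @mxdirect_sum_eigenspace F 'I_n n g predT a (in2W ia).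
have := mxdirectP dx => /= rk.
have ge1 j : (1 <= \rank (eigenspace g (a j)))%N.
  rewrite lt0n mxrank_eq0; apply: contra (nz j) => /eqP E0.
  by rewrite -submx0 -E0; apply/eigenspaceP.
have : (\sum_(j < n) \rank (eigenspace g (a j)) <= n)%N.
  by rewrite -rk rank_leq_col.
have h1 : (\sum_(j<n) 1 = n)%N by rewrite sum1_card card_ord.
have -> : (\sum_(j < n) \rank (eigenspace g (a j)) =
   \sum_(j < n) (\rank (eigenspace g (a j))).-1 + n)%N.
  rewrite (eq_bigr (fun j => (\rank (eigenspace g (a j))).-1 + 1)%N); last first.
    by move=> j _; rewrite addn1 prednK.
  by rewrite big_split /= h1.
rewrite addnC -[X in (_ <= X)%N](addn0 n) leq_add2l leqn0 sum_nat_eq0 => /forallP /(_ i) /=.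
move=> /eqP r1.
have wi : (w i <= eigenspace g (a i))%MS by apply/eigenspaceP.
have xi : (x <= eigenspace g (a i))%MS by apply/eigenspaceP.
have rw : \rank (w i) = 1%N.
  by apply/eqP; rewrite eqn_leq rank_leq_row lt0n mxrank_eq0 nz.
have := mxrank_leqif_eq wi; rewrite rw -(prednK (ge1 i)) r1 => [[_]].
rewrite eqxx => /esym eqw.
have : (x <= w i)%MS by apply: submx_trans xi _; case/andP: eqw.
case/submxP => D ->; exists (D 0 0).
by rewrite {1}[D]mx11_scalar mul_scalar_mx.
Qed.

Section H.
Variable R : realType.
Local Notation C := R[i].
Local Notation cm A := (map_mx (@conjc R) A).

Lemma cK (z : C) : conjc (conjc z) = z. Proof. exact: conjcK. Qed.
Lemma cMl (z w : C) : conjc (z * w) = conjc z * conjc w. Proof. exact: rmorphM. Qed.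
Lemma cS n (F : 'I_n -> C) : conjc (\sum_(k < n) F k) = \sum_(k < n) conjc (F k).
Proof. exact: rmorph_sum. Qed.
Lemma cdotD n (x y : 'cV[C]_n) : cdot x y = \sum_(k < n) x k 0 * conjc (y k 0).
Proof. by []. Qed.

Lemma cmK m n (A : 'M[C]_(m,n)) : cm (cm A) = A.
Proof. by apply/matrixP => i j; rewrite !mxE cK. Qed.

Lemma adjmxM m n p (A : 'M[C]_(m,n)) (B : 'M[C]_(n,p)) :
  adjmx (A *m B) = adjmx B *m adjmx A.
Proof. by rewrite /adjmx map_mxM trmx_mul. Qed.

Lemma adjmxK m n (A : 'M[C]_(m,n)) : adjmx (adjmx A) = A.
Proof. by apply/matrixP => i j; rewrite !mxE cK. Qed.

Lemma adjmx_cm m n (A : 'M[C]_(m,n)) : adjmx (cm A) = A^T.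
Proof. by apply/matrixP => i j; rewrite !mxE cK. Qed.

Lemma cdotE n (x y : 'cV[C]_n) : cdot x y = (adjmx y *m x) 0 0.
Proof. by rewrite cdotD mxE; apply: eq_bigr => k _; rewrite !mxE mulrC. Qed.

Lemma cdotC n (x y : 'cV[C]_n) : cdot y x = conjc (cdot x y).
Proof.
rewrite !cdotD cS; apply: eq_bigr => k _.
by rewrite cMl cK mulrC.
Qed.

Lemma cdotZ n a b (x y : 'cV[C]_n) :
  cdot (a *: x) (b *: y) = a * conjc b * cdot x y.
Proof.
rewrite !cdotD mulr_sumr; apply: eq_bigr => k _.
rewrite !mxE cMl -!mulrA; congr (_ * _).
by rewrite mulrCA.
Qed.

Lemma cdot_cm n (x y : 'cV[C]_n) : cdot (cm x) (cm y) = cdot y x.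
Proof. by rewrite !cdotD; apply: eq_bigr => k _; rewrite !mxE cK mulrC. Qed.

Lemma cmM m n p (A : 'M[C]_(m,n)) (B : 'M[C]_(n,p)) :
  cm (A *m B) = cm A *m cm B.
Proof. exact: map_mxM. Qed.

Lemma cmZ m n a (A : 'M[C]_(m,n)) : cm (a *: A) = conjc a *: cm A.
Proof. exact: map_mxZ. Qed.

End H.

Lemma cN (R : realType) (z : R[i]) : `|conjc z| = `|z|. Proof. exact: normcJ. Qed.

Lemma normMJ (R : realType) (a b c : R[i]) :
  `|a| = 1 -> `|b| = 1 -> `|c| = `|a * conjc b * conjc c|.
Proof. move=> na nb; rewrite !normrM !cN na nb !mul1r. reflexivity. Qed.

Theorem theorem1 (R : realType) (n : nat) (T : 'M[R[i]]_n)
  (lam : 'I_n -> R[i]) (u v : 'I_n -> 'cV[R[i]]_n) :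
  injective lam ->
  (forall i, unit_vec (u i) /\ T *m u i = lam i *: u i) ->
  (forall i, unit_vec (v i) /\ adjmx T *m v i = (lam i)^* *: v i) ->
  (exists S : 'M[R[i]]_n, complex_symmetric S /\ unitarily_equivalent T S) ->
  forall i j : 'I_n, (i < j)%N -> `|cdot (u i) (u j)| = `|cdot (v i) (v j)|.
Proof.
move=> ia hu hv [S [SS [U [uU TE]]]] i j _.
have UU' : U *m adjmx U = 1%:M := mulmx1C uU.
pose Cx (x : 'cV[R[i]]_n) := adjmx U *m map_mx (@conjc R) (U *m x).
have cdC x y : cdot (Cx x) (Cx y) = cdot y x.
  rewrite !cdotE /Cx adjmxM adjmxK -mulmxA (mulmxA U) UU' mul1mx adjmx_cm.
  have -> : ((U *m y)^T *m map_mx (@conjc R) (U *m x)) 0 0 = cdot (U *m y) (U *m x).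
    by rewrite cdotD mxE; apply: eq_bigr => k _; rewrite !mxE.
  by rewrite cdotE adjmxM -mulmxA (mulmxA (adjmx U)) uU mul1mx.
have eig k : T *m Cx (v k) = lam k *: Cx (v k).
  rewrite TE /Cx -!mulmxA (mulmxA U) UU' mul1mx.
  have cS : map_mx (@conjc R) S = adjmx S.
    by rewrite /adjmx map_trmx SS.
  have -> : S *m map_mx (@conjc R) (U *m v k)
      = map_mx (@conjc R) (adjmx S *m (U *m v k)).
    by rewrite [RHS]cmM -cS cmK.
  have -> : adjmx S *m (U *m v k) = U *m (adjmx T *m v k).
    by rewrite TE !adjmxM adjmxK !mulmxA UU' mul1mx.
  by rewrite (proj2 (hv k)) -[in LHS]scalemxAr cmZ cK scalemxAr.
have nz k : (u k)^T != 0.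
  rewrite trmx_eq0; apply/eqP => h; have := proj1 (hu k).
  rewrite /unit_vec h cdotD big1 => [|l _]; last by rewrite mxE mul0r.
  by move/eqP; rewrite eq_sym oner_eq0.
have ew k : (u k)^T *m T^T = lam k *: (u k)^T.
  by rewrite -trmx_mul (proj2 (hu k)) linearZ.
have ex k : exists c, Cx (v k) = c *: u k /\ `|c| = 1.
  have [c hc] : exists c, (Cx (v k))^T = c *: (u k)^T.
    apply: (@eig1 _ n (T^T) lam (fun k => (u k)^T) ia nz ew k).
    by rewrite -trmx_mul eig linearZ.
  have hc' : Cx (v k) = c *: u k by rewrite -[Cx _]trmxK hc linearZ /= trmxK.
  exists c; split => //.
  have := cdC (v k) (v k); rewrite hc' cdotZ (proj1 (hv k)) (proj1 (hu k)) mulr1.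
  rewrite -sqr_normc => /eqP; rewrite sqrf_eq1 => /orP[/eqP//|/eqP h].
  by have := normr_ge0 c; rewrite h ler0N1.
have [ci [hi ni]] := ex i; have [cj [hj nj]] := ex j.
have e : cdot (v i) (v j) = cj * conjc ci * conjc (cdot (u i) (u j)).
  by rewrite -[cdot (v i) (v j)]cdC hj hi cdotZ cdotC.
by rewrite e (@normMJ R _ _ _ nj ni).
Qed.
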